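(* Let $W$ be an $m\times m$ diagonal matrix with positive diagonal entries and $\bar W=W\otimes I_n$. If $\ker(C\bar J')=\operatorname{span}\bar I$ (equivalently, $\bar{\mathbb N}$ is well-configured), then $\bar W\bar J C'C\bar J'$ has exactly $n$ eigenvalues equal to zero (counted with algebraic multiplicity) and all its remaining eigenvalues are real and positive.
   Context: Setup: neighbor graph $\mathbb N$ is a directed graph on $\{1,\dots,m\}$ with $d$ arcs, enumerated $e_1,\dots,e_d$; each arc $e_k=(j,i)$ carries a real matrix $C_{e_k}=C_{ji}$ with $n$ columns. The incidence matrix $J\in\mathbb R^{m\times d}$ has in column $k$ a $+1$ in row $i$ and a $-1$ in row $j$ when $e_k=(j,i)$, zeros elsewhere. $C=\operatorname{blockdiag}(C_{e_1},\dots,C_{e_d})$, $\bar J=J\otimes I_n$, $\bar I=\mathbf 1_m\otimes I_n$, and $\operatorname{span}\bar I$ is the column space of $\bar I$; $'$ denotes transpose. $\bar{\mathbb N}$ is well-configured (for all $x_1,\dots,x_m\in\mathbb R^n$, $C_{ji}x_i=C_{ji}x_j$ for every arc $(j,i)$ implies $x_1=\cdots=x_m$) iff $\ker(C\bar J')=\operatorname{span}\bar I$. *)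

(* Defs.v *)
(* Kronecker product: mathcomp-real-closed's mxtens
   (A *t B, standard index convention (i,a) |-> i*n + a). *)
From HB Require Import structures.
From mathcomp Require Import all_boot all_order all_algebra.
From mathcomp Require Import mxtens.
From mathcomp Require Import reals.
Set Implicit Arguments. Unset Strict Implicit. Unset Printing Implicit Defensive.
Import Order.TTheory GRing.Theory Num.Theory.
Local Open Scope ring_scope.

Definition incidence (R : pzRingType) (m d : nat) (tl hd : 'I_d -> 'I_m) : 'M[R]_(m, d) :=
  \matrix_(i < m, k < d) ((i == hd k)%:R - (i == tl k)%:R).

Definition blockdiagC (R : pzRingType) (d n : nat) (r : 'I_d -> nat)
  (Cs : forall k : 'I_d, 'M[R]_(r k, n)) : 'M[R]_(\sum_(k < d) r k, \sum_(k < d) n) :=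
  \mxblock_(i < d, j < d) (if i == j then Cs i else 0).

Lemma sum_const_n (d n : nat) : (d * n = \sum_(k < d) n)%N.
Proof. by rewrite sum_nat_const card_ord. Qed.

Definition Jbar (R : pzRingType) (m d n : nat) (tl hd : 'I_d -> 'I_m) : 'M[R]_(m * n, d * n) :=
  incidence R tl hd *t (1%:M : 'M[R]_n).
Arguments Jbar R {m d} n tl hd.

(* C Jbar' : the transpose of Jbar, with its row count d*n identified with
   the column count sum_(k<d) n of C. *)
Definition CJbarT (R : pzRingType) (m d n : nat) (tl hd : 'I_d -> 'I_m)
  (r : 'I_d -> nat) (Cs : forall k : 'I_d, 'M[R]_(r k, n)) : 'M[R]_(\sum_(k < d) r k, m * n) :=
  blockdiagC Cs *m castmx (sum_const_n d n, erefl) (Jbar R n tl hd)^T.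

Definition Ibar (R : pzRingType) (m n : nat) : 'M[R]_(m * n, 1 * n) :=
  (const_mx 1 : 'M[R]_(m, 1)) *t (1%:M : 'M[R]_n).

(* Main.v *)
Require Import Defs.
From HB Require Import structures.
From mathcomp Require Import all_boot all_order all_algebra.
From mathcomp Require Import mxtens.
From mathcomp Require Import reals complex zify.
Set Implicit Arguments. Unset Strict Implicit. Unset Printing Implicit Defensive.
Import Order.TTheory GRing.Theory Num.Theory.
Local Open Scope ring_scope.
Lemma char_poly_simil (F : fieldType) n (P A : 'M[F]_n) : P \in unitmx ->
  char_poly (invmx P *m A *m P) = char_poly A.
Proof.
move=> Pu.
have E : char_poly_mx (invmx P *m A *m P) =
  map_mx polyC (invmx P) *m char_poly_mx A *m map_mx polyC P.
  rewrite /char_poly_mx mulmxBr mulmxBl -!map_mxM; congr (_ - _).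
  by rewrite -mulmxA mul_scalar_mx -scalemxAr -map_mxM mulVmx // map_mx1 scalemx1.
rewrite /char_poly E !det_mulmx mulrC mulrA !det_map_mx -rmorphM -det_mulmx mulmxV //.
by rewrite det1 rmorph1 mul1r.
Qed.

Lemma rank_cast (F : fieldType) m1 m2 n1 n2 (e : (m1 = m2) * (n1 = n2)) (A : 'M[F]_(m1, n1)) :
  \rank (castmx e A) = \rank A.
Proof. by case: e => e1 e2; subst; rewrite castmx_id. Qed.


Lemma rank_diag (F : fieldType) n (d : 'rV[F]_n) :
  \rank (diag_mx d) = (\sum_(i < n) ((d 0 i != 0)%R : nat))%N.
Proof.
elim: n d => [|n IH] d; first by rewrite big_ord0; apply/eqP; rewrite mxrank_eq0; apply/eqP/matrixP => -[].
change (\rank (@diag_mx _ (1 + n) d) = (\sum_(i < n.+1) ((d 0 i != 0)%R : nat))%N).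
rewrite -[X in diag_mx X](@hsubmxK _ 1 1 n) diag_mx_row rank_diag_block_mx IH big_ord_recl.
congr (_ + _)%N.
  have -> : diag_mx (lsubmx (d : 'rV_(1 + n))) = lsubmx (d : 'rV_(1 + n)).
    by apply/matrixP => i j; rewrite !ord1 !mxE.
  rewrite rank_rV; congr (nat_of_bool _).
  apply/idP/idP; apply: contra.
    move/eqP => H; apply/eqP/rowP => j; rewrite ord1 !mxE -H; f_equal; exact: val_inj.
  move/eqP/rowP/(_ ord0); rewrite !mxE => H; apply/eqP; rewrite -H; f_equal; exact: val_inj.
apply: eq_bigr => i _; rewrite !mxE; congr (d 0 _ != 0); exact: val_inj.
Qed.

Lemma sqnorm_ge0 (R : realFieldType) k (w : 'rV[R]_k) : 0 <= (w *m w^T) 0 0.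
Proof. by rewrite !mxE; apply: sumr_ge0 => j _; rewrite !mxE -expr2 sqr_ge0. Qed.

Lemma sqnorm_eq0 (R : realFieldType) k (w : 'rV[R]_k) : (w *m w^T) 0 0 = 0 -> w = 0.
Proof.
rewrite !mxE => H; apply/rowP => j; rewrite mxE.
have pos : forall i, predT i -> 0 <= w 0 i * w^T i 0.
  by move=> i _; rewrite !mxE -expr2 sqr_ge0.
have := psumr_eq0P pos H (i := j) isT.
by rewrite !mxE -expr2 => /eqP; rewrite sqrf_eq0 => /eqP.
Qed.

Lemma psd_char (R : realType) p N (G : 'M[R]_(p, N)) :
  exists s : seq R, [/\ size s = \rank G, all (fun x => 0 < x) s &
    char_poly (G^T *m G) = 'X ^+ (N - \rank G) * \prod_(x <- s) ('X - x%:P)].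
Proof.
pose K := G^T *m G.
have Ksym : K^T = K by rewrite /K trmx_mul trmxK.
pose f : {rmorphism R -> R[i]} := real_complex R.
pose Kc := map_mx f K.
have herm : Kc \is hermsymmx.
  apply: realsym_hermsym.
    apply/is_hermitianmxP; rewrite expr0 scale1r; apply/matrixP => i j; rewrite !mxE.
    have Kij : forall a b, K a b = K b a by move=> a b; rewrite -{1}Ksym mxE.
    by have := Kij i j; rewrite /K !mxE => ->.
  by apply/mxOverP => i j; rewrite mxE; apply/complex_realP; exists (K i j).
have /orthomx_spectralP Keq := hermitian_normalmx herm.
move: Keq; set P := spectralmx Kc; set lam := spectral_diag Kc => Keq.
have Pu : P \in unitmx := spectral_unit Kc.
have /mxOverP lreal := hermitian_spectral_diag_real herm.
pose mu i := complex.Re (lam 0 i).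
have lamE i : lam 0 i = f (mu i) by rewrite /mu /f /= RRe_real // lreal.
have charE : char_poly K = \prod_(i < N) ('X - (mu i)%:P).
  apply: (map_poly_inj f); rewrite map_char_poly -/Kc Keq char_poly_simil //.
  rewrite char_poly_trig ?diag_mx_is_trig // rmorph_prod.
  apply: eq_bigr => i _; symmetry; etransitivity; first exact: (map_polyXsubC f (mu i)).
  by rewrite mxE eqxx mulr1n lamE.
have mu_ge0 i : 0 <= mu i.
  have : root (char_poly K) (mu i).
    by rewrite charE /root horner_prod (bigD1 i) //= hornerXsubC subrr mul0r.
  rewrite -eigenvalue_root_char => /eigenvalueP [v vK v0].
  have e : (v *m G^T *m (v *m G^T)^T) 0 0 = mu i * (v *m v^T) 0 0.
    by rewrite trmx_mul trmxK mulmxA -(mulmxA v G^T G) -/K vK -scalemxAl mxE.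
  have vpos : 0 < (v *m v^T) 0 0.
    rewrite lt0r sqnorm_ge0 andbT; apply/eqP => /sqnorm_eq0 /eqP.
    by rewrite (negbTE v0).
  by have := sqnorm_ge0 (v *m G^T); rewrite e pmulr_lge0.
have rankK : \rank K = \rank G.
  have le1 : (\rank K <= \rank G^T)%N by exact: mxrankM_maxl.
  have sub : (kermx K <= kermx G^T)%MS.
    apply/sub_kermxP; apply/row_matrixP => i; rewrite row0 row_mul.
    apply: sqnorm_eq0.
    rewrite trmx_mul trmxK mulmxA -(mulmxA _ G^T G) -/K -row_mul mulmx_ker row0 mul0mx.
    by rewrite mxE.
  have := mxrankS sub; rewrite !mxrank_ker mxrank_tr => le2.
  have := rank_leq_col G; rewrite mxrank_tr in le1; lia.
have rank_mu : \rank G = #|[pred i | mu i != 0]|.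
  rewrite -rankK -(mxrank_map f) -/Kc Keq mxrankMfree ?row_free_unit //.
  rewrite -mxrank_tr trmx_mul mxrankMfree ?row_free_unit ?unitmx_tr ?unitmx_inv //.
  rewrite mxrank_tr rank_diag -sum1_card big_mkcond /=.
  rewrite [RHS]big_mkcond; apply: eq_bigr => i _; rewrite inE lamE fmorph_eq0; by case: (mu i != 0).
exists [seq mu i | i in [pred i | mu i != 0]]; split.
- by rewrite size_image rank_mu.
- by apply/allP => x /imageP [i iP ->]; rewrite lt0r mu_ge0 andbT; rewrite inE in iP.
rewrite charE big_image (bigID (fun i => mu i == 0)) /=.
have -> : \prod_(i < N | mu i == 0) ('X - (mu i)%:P) = 'X ^+ #|[pred i | mu i == 0]|.
  rewrite -prodr_const; apply: eq_big => i; first by rewrite inE.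
  by move/eqP ->; rewrite subr0.
congr (_ ^+ _ * _).
  have := cardC [pred i | mu i != 0]; rewrite card_ord -rank_mu.
  have -> : #|[predC [pred i | mu i != 0]]| = #|[pred i | mu i == 0]|.
    by apply: eq_card => i; rewrite !inE negbK.
  lia.
Qed.

Lemma rank_Ibar (R : fieldType) m n : (0 < m)%N -> \rank (Ibar R m n)^T = n.
Proof.
move=> m0; rewrite /Ibar trmx_tens trmx1.
apply/eqP; rewrite eqn_leq; apply/andP; split.
  by have := rank_leq_row ((const_mx 1 : 'M[R]_(m,1))^T *t (1%:M : 'M[R]_n)); move=> H; apply: leq_trans H _; rewrite mul1n.
pose X := (delta_mx (Ordinal m0) 0 : 'M[R]_(m,1)) *t (1%:M : 'M[R]_n).
apply: leq_trans (mxrankM_maxl _ X); rewrite tensmx_mul mulmx1.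
have -> : (const_mx 1 : 'M[R]_(m,1))^T *m delta_mx (Ordinal m0) 0 = 1%:M.
  apply/matrixP => a b; rewrite !ord1 !mxE (bigD1 (Ordinal m0)) //= big1.
    by rewrite !mxE !eqxx mul1r addr0.
  by move=> k kne; rewrite !mxE (negbTE kne) mulr0.
by rewrite tens_scalar_mx scale1r rank_cast mxrank1.
Qed.

Theorem lemma5 (R : realType) (m d n : nat) (tl hd : 'I_d -> 'I_m)
  (r : 'I_d -> nat) (Cs : forall k : 'I_d, 'M[R]_(r k, n)) (W : 'M[R]_m) :
  (0 < m)%N ->
  (forall k, tl k != hd k) ->
  injective (fun k => (tl k, hd k)) ->
  is_diag_mx W -> (forall i, 0 < W i i) ->
  (kermx (CJbarT tl hd Cs)^T == (Ibar R m n)^T)%MS ->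
  exists s : seq R,
    [/\ size s = (m * n - n)%N, all (fun x => 0 < x) s &
      char_poly ((W *t (1%:M : 'M[R]_n)) *m (CJbarT tl hd Cs)^T *m CJbarT tl hd Cs)
      = 'X ^+ n * \prod_(x <- s) ('X - x%:P)].
Proof.
move=> m0 _ _ Wdiag Wpos Hker.
set A := CJbarT tl hd Cs; set Wb := W *t (1%:M : 'M[R]_n).
have [rankA hn] : \rank A = (m * n - n)%N /\ (n <= m * n)%N.
  have := eqmx_rank Hker; rewrite mxrank_ker mxrank_tr rank_Ibar //.
  rewrite -/A; have := rank_leq_col A; lia.
pose wv := \row_i Wb i i.
have WbE : Wb = diag_mx wv.
  apply/matrixP => i j; case: (mxtens_indexP i) => i0 i1; case: (mxtens_indexP j) => j0 j1.
  rewrite [in RHS]mxE [in RHS]mxE /Wb !tensmxE (inj_eq (can_inj (@mxtens_indexK _ _))) xpair_eqE.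
  rewrite !mxE; case: (eqVneq i0 j0) => [<-|ne0].
    by rewrite eqxx mulr1 /=; case: (i1 == j1); rewrite ?mulr1 ?mulr0.
  by rewrite (is_diag_mxP Wdiag) // mul0r andFb.
have wpos i : 0 < wv 0 i.
  by case: (mxtens_indexP i) => i0 i1; rewrite mxE tensmxE mxE eqxx mulr1.
pose S := diag_mx (\row_i Num.sqrt (wv 0 i)).
have SS : S *m S = Wb.
  rewrite mulmx_diag WbE; congr diag_mx; apply/rowP => i.
  have := wpos i; rewrite /wv !mxE => h; rewrite -expr2 sqr_sqrtr //; exact: ltW.
have Su : S \in unitmx.
  rewrite unitmxE det_diag unitfE; apply/prodf_neq0 => i _.
  by rewrite mxE; apply: lt0r_neq0; rewrite sqrtr_gt0.
have STr : S^T = S by rewrite tr_diag_mx.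
have key : invmx S *m (Wb *m A^T *m A) *m S = (A *m S)^T *m (A *m S).
  by rewrite -SS [(A *m S)^T]trmx_mul STr !mulmxA mulVmx // mul1mx.
have [s [hs1 hs2 hs3]] := psd_char (A *m S).
exists s; split => //.
  by rewrite hs1 mxrankMfree ?row_free_unit.
rewrite -(@char_poly_simil _ _ S) // key hs3 mxrankMfree ?row_free_unit // rankA.
congr (_ ^+ _ * _); lia.
Qed.
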